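(* Let $\{S_{\mathbf a^{[k]}},\,k\ge0\}$ and $\{S_{\mathbf a^{*[k]}},\,k\ge0\}$ be two local subdivision schemes which both reproduce constants, with difference schemes $\{S_{\mathbf q^{[k]}},\,k\ge0\}$ and $\{S_{\mathbf q^{*[k]}},\,k\ge0\}$. Then the following are equivalent: (i) $\lim_{k\to\infty}\|\mathbf a^{[k]}-\mathbf a^{*[k]}\|=0$ (the schemes are asymptotically similar); (ii) $\lim_{k\to\infty}\|\mathbf q^{[k]}-\mathbf q^{*[k]}\|=0$. If in addition one of the two schemes is bounded (i.e. $\sup_k\|S_{\mathbf a^{[k]}}\|<\infty$ or $\sup_k\|S_{\mathbf a^{*[k]}}\|<\infty$), then (i) is also equivalent to: (iii) for every fixed integer $p\ge0$, $\lim_{k\to\infty}\|S_{\mathbf q^{[k+p]}}\cdots S_{\mathbf q^{[k]}}-S_{\mathbf q^{*[k+p]}}\cdots S_{\mathbf q^{*[k]}}\|=0$.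
   Context: A subdivision scheme $\{S_{\mathbf a^{[k]}},\,k\ge0\}$ is given by finitely supported masks $\mathbf a^{[k]}=\{a^{[k]}_i\}_{i\in\mathbb Z}$ and operators $(S_{\mathbf a^{[k]}}\mathbf f)_i=\sum_{j\in\mathbb Z}a^{[k]}_{i-2j}f_j$ on $\mathbf f\in\mathbb R^{\mathbb Z}$. Local means: there is a positive integer $N$ with all masks supported in $[-N,N]$. Norms are sup-norms: $\|\mathbf a\|=\sup_i|a_i|$ for masks/sequences, and $\|S_{\mathbf a}\|=\max(\sum_i|a_{2i}|,\sum_i|a_{2i+1}|)$ for operators (operator sup-norm). The scheme reproduces constants if $\sum_ia^{[k]}_{2i}=\sum_ia^{[k]}_{2i+1}=1$ for all $k$; then its difference scheme has masks $q^{[k]}_i=\sum_{j\le i}(-1)^{i-j}a^{[k]}_j$ (equivalently, symbols satisfy $a^{[k]}(z)=(1+z)q^{[k]}(z)$ where $a(z)=\sum_ia_iz^i$). *)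

(* Defs.v *)
From Stdlib Require Import Reals Lra Lia ZArith List ClassicalEpsilon.
From Coquelicot Require Import Coquelicot.
Open Scope R_scope.

Definition mask := Z -> R.

(* Finite sum g m + g (m+1) + ... + g n  (empty if n < m). *)
Definition zsum (m n : Z) (g : Z -> R) : R :=
  fold_right Rplus 0
    (map (fun k : nat => g (m + Z.of_nat k)%Z) (seq 0 (Z.to_nat (n - m + 1)))).

(* Sum over all of Z of a finitely supported g (window chosen by epsilon;
   any window containing the support gives the same value).  Unspecified
   if g is not finitely supported (never used in that case). *)
Definition sumZ (g : Z -> R) : R :=
  let M := epsilon (inhabits 0%nat)
             (fun M : nat => forall i, (Z.of_nat M < Z.abs i)%Z -> g i = 0) in
  zsum (- Z.of_nat M) (Z.of_nat M) g.

Definition subd (a : mask) (f : Z -> R) : Z -> R :=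
  fun i => sumZ (fun j => a (i - 2 * j)%Z * f j).

Definition local (a : nat -> mask) : Prop :=
  exists N : Z, (0 < N)%Z /\ forall k i, (N < Z.abs i)%Z -> a k i = 0.

Definition reproduces_constants (a : nat -> mask) : Prop :=
  forall k, sumZ (fun i => a k (2 * i)%Z) = 1 /\ sumZ (fun i => a k (2 * i + 1)%Z) = 1.

Definition diff_mask (a : mask) : mask :=
  fun i => sumZ (fun j => if (j <=? i)%Z then (-1) ^ (Z.to_nat (i - j)) * a j else 0).

Definition mask_norm (a : mask) : R :=
  real (Lub_Rbar (fun x => exists i, x = Rabs (a i))).

Definition subd_norm (a : mask) : R :=
  Rmax (sumZ (fun i => Rabs (a (2 * i)%Z))) (sumZ (fun i => Rabs (a (2 * i + 1)%Z))).

Definition opnorm (T : (Z -> R) -> (Z -> R)) : R :=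
  real (Lub_Rbar (fun x => exists (f : Z -> R) (i : Z),
                      (forall j, Rabs (f j) <= 1) /\ x = Rabs (T f i))).

Fixpoint prod_ops (a : nat -> mask) (k p : nat) : (Z -> R) -> (Z -> R) :=
  match p with
  | O => subd (a k)
  | S p' => fun f => subd (a (k + p)%nat) (prod_ops a k p' f)
  end.

Definition bounded_scheme (a : nat -> mask) : Prop :=
  exists C : R, forall k, subd_norm (a k) <= C.

(* Main.v *)
Require Import Defs.
From Stdlib Require Import Reals Lra Lia ZArith List ClassicalEpsilon FunctionalExtensionality.
From Coquelicot Require Import Coquelicot.
Open Scope R_scope.

Definition F (m : Z) (L : nat) (g : Z -> R) : R :=
  fold_right Rplus 0 (map (fun k : nat => g (m + Z.of_nat k)%Z) (seq 0 L)).

Lemma F_0 m g : F m 0 g = 0.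
Proof. reflexivity. Qed.

Lemma F_S_l m L g : F m (S L) g = g m + F (m+1) L g.
Proof.
  unfold F. cbn [seq map fold_right]. rewrite Z.add_0_r. f_equal.
  rewrite <- seq_shift, map_map. f_equal. apply map_ext. intro k.
  f_equal. lia.
Qed.

Lemma fold_plus_acc (l : list R) x : fold_right Rplus x l = fold_right Rplus 0 l + x.
Proof. induction l; simpl; [lra|rewrite IHl; lra]. Qed.

Lemma F_S_r m L g : F m (S L) g = F m L g + g (m + Z.of_nat L)%Z.
Proof.
  unfold F. rewrite seq_S, map_app, fold_right_app. simpl.
  rewrite fold_plus_acc. lra.
Qed.

Lemma F_ext m L g h : (forall i, g i = h i) -> F m L g = F m L h.
Proof. intro H. unfold F. f_equal. apply map_ext. auto. Qed.

Lemma F_lin m L g h c d : F m L (fun i => c * g i + d * h i) = c * F m L g + d * F m L h.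
Proof.
  revert m; induction L; intro m.
  - rewrite !F_0; lra.
  - rewrite !F_S_l, IHL. lra.
Qed.

Lemma F_sub m L g h : F m L (fun i => g i - h i) = F m L g - F m L h.
Proof.
  transitivity (F m L (fun i => 1 * g i + (-1) * h i)).
  - apply F_ext; intro; lra.
  - rewrite F_lin; lra.
Qed.

Lemma F_add m L g h : F m L (fun i => g i + h i) = F m L g + F m L h.
Proof.
  transitivity (F m L (fun i => 1 * g i + 1 * h i)).
  - apply F_ext; intro; lra.
  - rewrite F_lin; lra.
Qed.

Lemma F_scal m L g c : F m L (fun i => c * g i) = c * F m L g.
Proof.
  transitivity (F m L (fun i => c * g i + 0 * g i)).
  - apply F_ext; intro; lra.
  - rewrite F_lin; lra.
Qed.

Lemma F_bound m L g B : (forall i, Rabs (g i) <= B) -> Rabs (F m L g) <= INR L * B.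
Proof.
  intro H. revert m; induction L; intro m.
  - rewrite F_0, Rabs_R0. simpl. lra.
  - rewrite F_S_l, S_INR. eapply Rle_trans; [apply Rabs_triang|].
    specialize (IHL (m+1)%Z). specialize (H m). lra.
Qed.

Lemma F_nonneg_ge m L g i : (forall j, 0 <= g j) -> (m <= i < m + Z.of_nat L)%Z -> g i <= F m L g.
Proof.
  intros H. revert m; induction L; intros m Hi; [simpl in Hi; lia|].
  rewrite F_S_l.
  destruct (Z.eq_dec i m) as [->|ne].
  - assert (0 <= F (m+1) L g).
    { clear IHL Hi. revert m; induction L; intro m; [rewrite F_0; lra|].
      rewrite F_S_l. specialize (IHL (m+1)%Z). specialize (H (m+1)%Z). lra. }
    lra.
  - specialize (IHL (m+1)%Z ltac:(lia)). specialize (H m). lra.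
Qed.

Definition supp (g : Z -> R) (m : Z) (L : nat) : Prop :=
  forall i, (i < m \/ m + Z.of_nat L <= i)%Z -> g i = 0.

Lemma F_ext_left n m L g : (forall i, (m - Z.of_nat n <= i < m)%Z -> g i = 0) ->
  F (m - Z.of_nat n) (n + L) g = F m L g.
Proof.
  induction n; intro H.
  - simpl. f_equal. lia.
  - simpl (S n + L)%nat. rewrite F_S_l. rewrite H by lia.
    replace (m - Z.of_nat (S n) + 1)%Z with (m - Z.of_nat n)%Z by lia.
    rewrite IHn; [lra|]. intros; apply H; lia.
Qed.

Lemma F_ext_right n m L g : (forall i, (m + Z.of_nat L <= i < m + Z.of_nat L + Z.of_nat n)%Z -> g i = 0) ->
  F m (L + n) g = F m L g.
Proof.
  induction n; intro H.
  - rewrite Nat.add_0_r. reflexivity.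
  - rewrite Nat.add_succ_r, F_S_r, H by lia. rewrite IHn; [lra|]. intros; apply H; lia.
Qed.

Lemma F_hull g m L m0 L0 : supp g m L -> (m0 <= m)%Z -> (m + Z.of_nat L <= m0 + Z.of_nat L0)%Z ->
  F m0 L0 g = F m L g.
Proof.
  intros Hs H1 H2.
  set (n1 := Z.to_nat (m - m0)). set (n2 := (L0 - n1 - L)%nat).
  replace m0 with (m - Z.of_nat n1)%Z by (unfold n1; lia).
  replace L0 with (n1 + (L + n2))%nat by (unfold n2, n1; lia).
  rewrite F_ext_left. 2:{ intros; apply Hs; lia. }
  apply F_ext_right. intros; apply Hs; lia.
Qed.

Lemma F_window g m L m' L' : supp g m L -> supp g m' L' -> F m L g = F m' L' g.
Proof.
  intros H H'.
  set (m0 := Z.min m m'). set (L0 := Z.to_nat (Z.max (m + Z.of_nat L) (m' + Z.of_nat L') - m0)).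
  rewrite <- (F_hull g m L m0 L0), <- (F_hull g m' L' m0 L0); auto; unfold m0, L0; lia.
Qed.

Lemma sumZ_win g m L : supp g m L -> sumZ g = F m L g.
Proof.
  intro H. unfold sumZ.
  set (P := fun M : nat => forall i, (Z.of_nat M < Z.abs i)%Z -> g i = 0).
  assert (HP : P (epsilon (inhabits 0%nat) P)).
  { apply epsilon_spec. exists (Z.to_nat (Z.max (Z.abs m) (Z.abs (m + Z.of_nat L)))).
    intros i Hi. apply H. lia. }
  set (M := epsilon (inhabits 0%nat) P) in *.
  unfold zsum. fold (F (- Z.of_nat M) (Z.to_nat (Z.of_nat M - - Z.of_nat M + 1)) g).
  apply F_window; auto. intros i Hi. apply HP. lia.
Qed.
Lemma sumZ_lin g h c d m L : supp g m L -> supp h m L ->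
  sumZ (fun i => c * g i + d * h i) = c * sumZ g + d * sumZ h.
Proof.
  intros Hg Hh. rewrite (sumZ_win g m L Hg), (sumZ_win h m L Hh), (sumZ_win _ m L).
  - apply F_lin.
  - intros i Hi. rewrite Hg, Hh by auto. lra.
Qed.

Lemma sumZ_sub g h m L : supp g m L -> supp h m L ->
  sumZ (fun i => g i - h i) = sumZ g - sumZ h.
Proof.
  intros Hg Hh. transitivity (sumZ (fun i => 1 * g i + (-1) * h i)).
  - f_equal. apply functional_extensionality; intro; lra.
  - rewrite (sumZ_lin g h 1 (-1) m L Hg Hh). lra.
Qed.

Lemma sumZ_add g h m L : supp g m L -> supp h m L ->
  sumZ (fun i => g i + h i) = sumZ g + sumZ h.
Proof.
  intros Hg Hh. transitivity (sumZ (fun i => 1 * g i + 1 * h i)).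
  - f_equal. apply functional_extensionality; intro; lra.
  - rewrite (sumZ_lin g h 1 1 m L Hg Hh). lra.
Qed.

Lemma sumZ_scal g c m L : supp g m L -> sumZ (fun i => c * g i) = c * sumZ g.
Proof.
  intros Hg. transitivity (sumZ (fun i => c * g i + 0 * g i)).
  - f_equal. apply functional_extensionality; intro; lra.
  - rewrite (sumZ_lin g g c 0 m L Hg Hg). lra.
Qed.

Lemma sumZ_ext g h : (forall i, g i = h i) -> sumZ g = sumZ h.
Proof. intro H. f_equal. apply functional_extensionality; auto. Qed.

Lemma sumZ_delta i c : sumZ (fun j => if Z.eqb j i then c else 0) = c.
Proof.
  rewrite (sumZ_win _ i 1).
  - rewrite F_S_l, F_0, Z.eqb_refl. lra.
  - intros j Hj. destruct (Z.eqb_spec j i); [lia|auto].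
Qed.

Lemma sumZ_bound g m L B : supp g m L -> (forall i, Rabs (g i) <= B) -> Rabs (sumZ g) <= INR L * B.
Proof. intros Hs H. rewrite (sumZ_win g m L Hs). apply F_bound; auto. Qed.

Lemma lub_bounds (E : R -> Prop) b x0 : (forall x, E x -> x <= b) -> E x0 ->
  (forall x, E x -> x <= real (Lub_Rbar E)) /\ real (Lub_Rbar E) <= b.
Proof.
  intros Hb H0. destruct (Lub_Rbar_correct E) as [Hub Hlub].
  destruct (Lub_Rbar E) as [r| |] eqn:He.
  - split.
    + intros x Ex. exact (Hub x Ex).
    + apply (Hlub (Finite b)). intros x Ex. simpl. auto.
  - exfalso. specialize (Hlub (Finite b)). simpl in Hlub. apply Hlub. intros x Ex. simpl. auto.
  - exfalso. specialize (Hub x0 H0). simpl in Hub. auto.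
Qed.

Lemma mn_bound x B : (forall i, Rabs (x i) <= B) ->
  (forall i, Rabs (x i) <= mask_norm x) /\ mask_norm x <= B.
Proof.
  intro H. unfold mask_norm.
  destruct (lub_bounds (fun y => exists i, y = Rabs (x i)) B (Rabs (x 0%Z))) as [H1 H2].
  - intros y [i ->]. auto.
  - exists 0%Z; auto.
  - split; auto. intro i. apply H1. exists i; auto.
Qed.

Lemma fin_bnd (M : nat) (g : Z -> R) : exists B, 0 <= B /\ forall i, (Z.abs i <= Z.of_nat M)%Z -> Rabs (g i) <= B.
Proof.
  induction M.
  - exists (Rabs (g 0%Z)). split; [apply Rabs_pos|]. intros i Hi. replace i with 0%Z by lia. lra.
  - destruct IHM as [B [HB0 HB]].
    exists (Rmax B (Rmax (Rabs (g (Z.of_nat (S M)))) (Rabs (g (- Z.of_nat (S M))%Z)))).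
    split. { eapply Rle_trans; [exact HB0| apply Rmax_l]. }
    intros i Hi. destruct (Z_le_gt_dec (Z.abs i) (Z.of_nat M)).
    + eapply Rle_trans; [apply HB; auto| apply Rmax_l].
    + eapply Rle_trans; [|apply Rmax_r].
      destruct (Z_le_gt_dec 0 i).
      * replace i with (Z.of_nat (S M)) by lia. apply Rmax_l.
      * replace i with (- Z.of_nat (S M))%Z by lia. apply Rmax_r.
Qed.

Lemma supp_bnd (M : nat) (g : Z -> R) : (forall i, (Z.of_nat M < Z.abs i)%Z -> g i = 0) ->
  exists B, 0 <= B /\ forall i, Rabs (g i) <= B.
Proof.
  intro H. destruct (fin_bnd M g) as [B [HB0 HB]]. exists B. split; auto.
  intro i. destruct (Z_le_gt_dec (Z.abs i) (Z.of_nat M)); auto.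
  rewrite H by lia. rewrite Rabs_R0. auto.
Qed.

Lemma sgn_nat n : (-1)^n = if Z.even (Z.of_nat n) then 1 else -1.
Proof.
  induction n; [reflexivity|].
  rewrite Nat2Z.inj_succ, Z.even_succ, <- Z.negb_even. simpl pow. rewrite IHn.
  destruct (Z.even (Z.of_nat n)); simpl; lra.
Qed.

Lemma sgn x : (0 <= x)%Z -> (-1)^(Z.to_nat x) = if Z.even x then 1 else -1.
Proof. intro H. rewrite sgn_nat, Z2Nat.id by lia. reflexivity. Qed.
Definition suppK (a : Z -> R) (K : nat) := forall i, (Z.of_nat K < Z.abs i)%Z -> a i = 0.

Definition hq (a : Z -> R) (i j : Z) : R :=
  if (j <=? i)%Z then (-1) ^ (Z.to_nat (i - j)) * a j else 0.

Lemma dm_eq a i : diff_mask a i = sumZ (hq a i).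
Proof. reflexivity. Qed.

Lemma hq_supp a K i : suppK a K -> supp (hq a i) (- Z.of_nat K) (2 * K + 1).
Proof.
  intros H j Hj. unfold hq. rewrite H by lia. destruct (j <=? i)%Z; lra.
Qed.

Lemma pow_m1_abs n : Rabs ((-1) ^ n) = 1.
Proof. rewrite <- RPow_abs, Rabs_m1. apply pow1. Qed.

Lemma hq_abs_diff a b i j : Rabs (hq a i j - hq b i j) <= Rabs (a j - b j).
Proof.
  unfold hq. destruct (j <=? i)%Z.
  - rewrite <- Rmult_minus_distr_l, Rabs_mult, pow_m1_abs. lra.
  - rewrite Rminus_0_r, Rabs_R0. apply Rabs_pos.
Qed.

Lemma dm_diff_bound a b K B : suppK a K -> suppK b K -> (forall j, Rabs (a j - b j) <= B) ->
  forall i, Rabs (diff_mask a i - diff_mask b i) <= INR (2 * K + 1) * B.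
Proof.
  intros Ha Hb HB i. rewrite !dm_eq.
  rewrite <- (sumZ_sub _ _ _ _ (hq_supp a K i Ha) (hq_supp b K i Hb)).
  apply (sumZ_bound _ (- Z.of_nat K) (2*K+1)).
  - intros j Hj. rewrite (hq_supp a K i Ha j Hj), (hq_supp b K i Hb j Hj). lra.
  - intro j. eapply Rle_trans; [apply hq_abs_diff| apply HB].
Qed.

Lemma dm_bound a K B : suppK a K -> (forall j, Rabs (a j) <= B) ->
  forall i, Rabs (diff_mask a i) <= INR (2 * K + 1) * B.
Proof.
  intros Ha HB i.
  assert (H0 : diff_mask (fun _ => 0) i = 0).
  { rewrite dm_eq. transitivity (sumZ (fun j => 0 * hq a i j)).
    - apply sumZ_ext. intro j. unfold hq. destruct (j <=? i)%Z; lra.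
    - rewrite (sumZ_scal _ 0 _ _ (hq_supp a K i Ha)). lra. }
  replace (diff_mask a i) with (diff_mask a i - diff_mask (fun _ => 0) i) by lra.
  apply (dm_diff_bound a (fun _ => 0) K B Ha); [intros j Hj; auto|].
  intro j. rewrite Rminus_0_r. auto.
Qed.

Lemma F_split m L g : F (2 * m) (2 * L) g = F m L (fun i => g (2 * i)%Z) + F m L (fun i => g (2 * i + 1)%Z).
Proof.
  revert m; induction L; intro m.
  - rewrite !F_0. lra.
  - replace (2 * S L)%nat with (S (S (2 * L))) by lia.
    rewrite !F_S_l. replace (2 * m + 1 + 1)%Z with (2 * (m + 1))%Z by lia.
    rewrite IHL. lra.
Qed.

Lemma dm_recover a K i : suppK a K -> a i = diff_mask a i + diff_mask a (i - 1)%Z.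
Proof.
  intro Ha. rewrite !dm_eq.
  rewrite <- (sumZ_add _ _ _ _ (hq_supp a K i Ha) (hq_supp a K (i-1)%Z Ha)).
  rewrite <- (sumZ_delta i (a i)) at 1. apply sumZ_ext. intro j. unfold hq.
  destruct (Z.eqb_spec j i) as [->|ne].
  - rewrite Z.leb_refl. replace (i <=? i - 1)%Z with false by (symmetry; apply Z.leb_gt; lia).
    rewrite Z.sub_diag. simpl. lra.
  - destruct (Z.leb_spec j i); destruct (Z.leb_spec j (i-1)); try lia.
    + rewrite !sgn by lia. replace (i - j)%Z with (Z.succ (i - 1 - j)) by lia.
      rewrite Z.even_succ, <- Z.negb_even. destruct (Z.even (i - 1 - j)); simpl; lra.
    + lra.
Qed.

Lemma dm_supp a K : suppK a K -> sumZ (fun i => a (2 * i)%Z) = 1 -> sumZ (fun i => a (2 * i + 1)%Z) = 1 ->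
  suppK (diff_mask a) K.
Proof.
  intros Ha H0 H1 l Hl. rewrite dm_eq.
  destruct (Z_lt_le_dec l 0).
  - transitivity (sumZ (fun j => 0 * hq a l j)).
    + apply sumZ_ext. intro j. unfold hq. destruct (Z.leb_spec j l).
      * rewrite Ha by lia. lra.
      * lra.
    + rewrite (sumZ_scal _ 0 _ _ (hq_supp a K l Ha)). lra.
  - set (s := if Z.even l then 1 else -1).
    rewrite (sumZ_win _ (2 * (- Z.of_nat K)) (2 * (2 * K + 1))).
    2:{ intros j Hj. apply (hq_supp a K l Ha). lia. }
    rewrite F_split.
    assert (E0 : forall i, hq a l (2 * i) = s * a (2 * i)%Z).
    { intro i. unfold hq, s. destruct (Z.leb_spec (2*i) l).
      - rewrite sgn by lia. rewrite Z.even_sub, Z.even_even. destruct (Z.even l); simpl; lra.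
      - rewrite Ha by lia. lra. }
    assert (E1 : forall i, hq a l (2 * i + 1) = (- s) * a (2 * i + 1)%Z).
    { intro i. unfold hq, s. destruct (Z.leb_spec (2*i+1) l).
      - rewrite sgn by lia. rewrite Z.even_sub, Z.even_odd. destruct (Z.even l); simpl; lra.
      - rewrite Ha by lia. lra. }
    rewrite (F_ext _ _ _ _ E0), (F_ext _ _ _ _ E1), !F_scal.
    assert (S0 : supp (fun i => a (2 * i)%Z) (- Z.of_nat K) (2 * K + 1)).
    { intros i Hi. apply Ha. lia. }
    assert (S1 : supp (fun i => a (2 * i + 1)%Z) (- Z.of_nat K) (2 * K + 1)).
    { intros i Hi. apply Ha. lia. }
    rewrite <- (sumZ_win _ _ _ S0), <- (sumZ_win _ _ _ S1), H0, H1. lra.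
Qed.
Lemma subd_supp q K f i : suppK q K -> supp (fun j => q (i - 2 * j)%Z * f j) ((i - Z.of_nat K) / 2)%Z (S K).
Proof.
  intros Hq j Hj. rewrite Hq; [lra|].
  assert (Z.of_nat (S K) = Z.of_nat K + 1)%Z by lia.
  Z.div_mod_to_equations. lia.
Qed.

Lemma subd_bound q K Q f B i : suppK q K -> (forall l, Rabs (q l) <= Q) -> (forall j, Rabs (f j) <= B) ->
  Rabs (subd q f i) <= INR (S K) * (Q * B).
Proof.
  intros Hq HQ HB. unfold subd. apply (sumZ_bound _ _ _ _ (subd_supp q K f i Hq)).
  intro j. rewrite Rabs_mult. apply Rmult_le_compat; try apply Rabs_pos; auto.
Qed.

Lemma subd_sub_f q K f g i : suppK q K ->
  subd q f i - subd q g i = subd q (fun j => f j - g j) i.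
Proof.
  intro Hq. unfold subd. rewrite <- (sumZ_sub _ _ _ _ (subd_supp q K f i Hq) (subd_supp q K g i Hq)).
  apply sumZ_ext. intro; ring.
Qed.

Lemma subd_sub_q q q' K f i : suppK q K -> suppK q' K ->
  subd q f i - subd q' f i = subd (fun l => q l - q' l) f i.
Proof.
  intros Hq Hq'. unfold subd. rewrite <- (sumZ_sub _ _ _ _ (subd_supp q K f i Hq) (subd_supp q' K f i Hq')).
  apply sumZ_ext. intro; ring.
Qed.

Lemma subd_delta q i : subd q (fun j => if Z.eqb j 0 then 1 else 0) i = q i.
Proof.
  unfold subd. rewrite <- (sumZ_delta 0 (q i)). apply sumZ_ext. intro j.
  destruct (Z.eqb_spec j 0) as [->|]; [rewrite Z.mul_0_r, Z.sub_0_r; ring|ring].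
Qed.

Lemma opnorm_bound (T : (Z -> R) -> (Z -> R)) b :
  (forall f i, (forall j, Rabs (f j) <= 1) -> Rabs (T f i) <= b) ->
  (forall f i, (forall j, Rabs (f j) <= 1) -> Rabs (T f i) <= opnorm T) /\ 0 <= opnorm T /\ opnorm T <= b.
Proof.
  intro H. unfold opnorm.
  set (E := fun x => exists (f : Z -> R) (i : Z), (forall j, Rabs (f j) <= 1) /\ x = Rabs (T f i)).
  assert (E0 : E (Rabs (T (fun _ => 0) 0%Z))).
  { exists (fun _ => 0), 0%Z. split; auto. intro; rewrite Rabs_R0; lra. }
  assert (Hb : forall x, E x -> x <= b). { intros x [f [i [Hf ->]]]. auto. }
  destruct (lub_bounds E b _ Hb E0) as [H1 H2].
  - split; [|split]; auto.
    + intros f i Hf. apply H1. exists f, i. auto.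
    + eapply Rle_trans; [apply Rabs_pos| apply H1; exact E0].
Qed.

Lemma lim_lin u v x y : is_lim_seq u 0 -> is_lim_seq v 0 -> is_lim_seq (fun n => x * u n + y * v n) 0.
Proof.
  intros Hu Hv.
  pose proof (is_lim_seq_scal_l u x 0 Hu) as H1. simpl in H1. rewrite Rmult_0_r in H1.
  pose proof (is_lim_seq_scal_l v y 0 Hv) as H2. simpl in H2. rewrite Rmult_0_r in H2.
  pose proof (is_lim_seq_plus' _ _ 0 0 H1 H2) as H3. rewrite Rplus_0_r in H3. exact H3.
Qed.

Lemma squeeze0 u v : (forall n, 0 <= u n <= v n) -> is_lim_seq v 0 -> is_lim_seq u 0.
Proof.
  intros H Hv. apply (is_lim_seq_le_le (fun _ => 0) u v); auto. apply is_lim_seq_const.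
Qed.

Lemma lim_bounded u : is_lim_seq u 0 -> exists M, forall n, Rabs (u n) <= M.
Proof.
  intro H. apply is_lim_seq_spec in H. destruct (H (mkposreal 1 Rlt_0_1)) as [N HN].
  assert (Hf : forall N, exists M, forall n, (n <= N)%nat -> Rabs (u n) <= M).
  { induction N0.
    - exists (Rabs (u 0%nat)). intros n Hn. replace n with 0%nat by lia. lra.
    - destruct IHN0 as [M HM]. exists (Rmax M (Rabs (u (S N0)))). intros n Hn.
      destruct (Nat.eq_dec n (S N0)) as [->|]; [apply Rmax_r|].
      eapply Rle_trans; [apply HM; lia| apply Rmax_l]. }
  destruct (Hf N) as [M HM]. exists (Rmax M 1). intro n.
  destruct (le_lt_dec n N).
  - eapply Rle_trans; [apply HM; auto| apply Rmax_l].
  - specialize (HN n ltac:(lia)). simpl in HN. rewrite Rminus_0_r in HN.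
    eapply Rle_trans; [|apply Rmax_r]. lra.
Qed.

Section Prod.
Variables (q qs : nat -> Z -> R) (K : nat) (C : R) (D : nat -> R).
Hypotheses (Hq : forall m, suppK (q m) K) (Hqs : forall m, suppK (qs m) K)
  (HC : forall m l, Rabs (q m l) <= C) (HCs : forall m l, Rabs (qs m l) <= C)
  (HD : forall m l, Rabs (q m l - qs m l) <= D m).

Let c := INR (S K).

Fixpoint ee (p k : nat) : R :=
  match p with
  | O => c * D k
  | S p' => (c * C) * ee p' k + (c * (c * C) ^ (S p')) * D (k + S p')%nat
  end.

Lemma prod_bound_s p k f B : (forall j, Rabs (f j) <= B) ->
  forall i, Rabs (prod_ops qs k p f i) <= (c * C) ^ (S p) * B.
Proof.
  revert f B; induction p; intros f B Hf i.
  - simpl. replace (c * C * 1 * B) with (c * (C * B)) by ring. apply (subd_bound _ K); auto.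
  - change (prod_ops qs k (S p) f i) with (subd (qs (k + S p)%nat) (prod_ops qs k p f) i).
    replace ((c * C) ^ S (S p) * B) with (c * (C * ((c * C) ^ S p * B))) by (simpl; ring).
    apply (subd_bound _ K); auto.
Qed.

Lemma prod_bound_diff p k f B : (forall j, Rabs (f j) <= B) ->
  forall i, Rabs (prod_ops q k p f i - prod_ops qs k p f i) <= ee p k * B.
Proof.
  revert f B; induction p; intros f B Hf i.
  - simpl. rewrite (subd_sub_q _ _ K _ _ (Hq k) (Hqs k)).
    replace (c * D k * B) with (c * (D k * B)) by ring.
    apply (subd_bound _ K).
    + intros l Hl. rewrite (Hq k l Hl), (Hqs k l Hl). ring.
    + auto.
    + auto.
  - change (prod_ops q k (S p) f i) with (subd (q (k + S p)%nat) (prod_ops q k p f) i).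
    change (prod_ops qs k (S p) f i) with (subd (qs (k + S p)%nat) (prod_ops qs k p f) i).
    set (m := (k + S p)%nat).
    replace (subd (q m) (prod_ops q k p f) i - subd (qs m) (prod_ops qs k p f) i) with
      ((subd (q m) (prod_ops q k p f) i - subd (q m) (prod_ops qs k p f) i) +
       (subd (q m) (prod_ops qs k p f) i - subd (qs m) (prod_ops qs k p f) i)) by ring.
    rewrite (subd_sub_f _ K _ _ _ (Hq m)), (subd_sub_q _ _ K _ _ (Hq m) (Hqs m)).
    eapply Rle_trans; [apply Rabs_triang|].
    simpl ee. fold m.
    replace ((c * C * ee p k + c * (c * C * (c * C) ^ p) * D m) * B) with
      (c * (C * (ee p k * B)) + c * (D m * ((c * C) ^ S p * B))) by (simpl; ring).
    apply Rplus_le_compat.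
    + apply (subd_bound _ K); [auto|auto|]. intro j. apply IHp. auto.
    + apply (subd_bound _ K).
      * intros l Hl. rewrite (Hq m l Hl), (Hqs m l Hl). ring.
      * auto.
      * intro j. apply prod_bound_s. auto.
Qed.

Lemma ee_lim p : is_lim_seq D 0 -> is_lim_seq (fun k => ee p k) 0.
Proof.
  intro HD0. induction p.
  - simpl. pose proof (lim_lin D D c 0 HD0 HD0) as H. eapply is_lim_seq_ext; [|exact H].
    intro; simpl; ring.
  - simpl. apply lim_lin; auto.
    apply (is_lim_seq_incr_n D (S p) 0). auto.
Qed.

End Prod.
Lemma F_nonneg m L g : (forall j, 0 <= g j) -> 0 <= F m L g.
Proof.
  intro H. revert m; induction L; intro m; [rewrite F_0; lra|].
  rewrite F_S_l. specialize (IHL (m+1)%Z). specialize (H m). lra.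
Qed.

Lemma abs_le_half (g : Z -> R) K t : suppK (fun i => g (2 * i)%Z) K ->
  Rabs (g (2 * t)%Z) <= sumZ (fun i => Rabs (g (2 * i)%Z)).
Proof.
  intro Hs.
  set (m := (- (Z.of_nat K + Z.abs t))%Z). set (L := Z.to_nat (2 * (Z.of_nat K + Z.abs t) + 1)).
  rewrite (sumZ_win _ m L).
  - apply (F_nonneg_ge m L (fun i => Rabs (g (2 * i)%Z)) t); [intro; apply Rabs_pos|]. unfold m, L; lia.
  - intros i Hi. rewrite Hs; [apply Rabs_R0|]. unfold m, L in Hi. lia.
Qed.

Lemma abs_le_subd_norm a K j : suppK a K -> Rabs (a j) <= subd_norm a.
Proof.
  intro Ha. unfold subd_norm.
  assert (Hj : j = (2 * (j / 2) + j mod 2)%Z) by (apply Z.div_mod; lia).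
  assert (Hm : (j mod 2 = 0 \/ j mod 2 = 1)%Z) by (Z.div_mod_to_equations; lia).
  destruct Hm as [H0|H1].
  - eapply Rle_trans; [|apply Rmax_l].
    rewrite H0, Z.add_0_r in Hj. rewrite Hj.
    apply (abs_le_half a K). intros i Hi. apply Ha. lia.
  - eapply Rle_trans; [|apply Rmax_r].
    rewrite H1 in Hj. rewrite Hj.
    apply (abs_le_half (fun l => a (l + 1)%Z) K). intros i Hi. apply Ha. lia.
Qed.

Lemma mn_nonneg x B : (forall i, Rabs (x i) <= B) -> 0 <= mask_norm x.
Proof.
  intro H. destruct (mn_bound x B H) as [H1 _]. eapply Rle_trans; [apply Rabs_pos|apply (H1 0%Z)].
Qed.

Theorem proposition8 (a astar : nat -> Z -> R) :
  local a -> local astar ->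
  reproduces_constants a -> reproduces_constants astar ->
  ((is_lim_seq (fun k => mask_norm (fun i => a k i - astar k i)) 0 <->
    is_lim_seq (fun k => mask_norm (fun i => diff_mask (a k) i - diff_mask (astar k) i)) 0)
  /\
  ((bounded_scheme a \/ bounded_scheme astar) ->
   (is_lim_seq (fun k => mask_norm (fun i => a k i - astar k i)) 0 <->
    forall p : nat,
      is_lim_seq (fun k => opnorm (fun f i =>
          prod_ops (fun m => diff_mask (a m)) k p f i
          - prod_ops (fun m => diff_mask (astar m)) k p f i)) 0))).
Proof.
  intros [Na [Na0 HNa]] [Ns [Ns0 HNs]] Ra Rs.
  set (K := Z.to_nat (Z.max Na Ns)).
  assert (HaK : forall k, suppK (a k) K) by (intros k i Hi; apply HNa; unfold K in Hi; lia).
  assert (HsK : forall k, suppK (astar k) K) by (intros k i Hi; apply HNs; unfold K in Hi; lia).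
  assert (HqK : forall k, suppK (diff_mask (a k)) K)
    by (intro k; apply dm_supp; [apply HaK|apply (Ra k)|apply (Ra k)]).
  assert (HqsK : forall k, suppK (diff_mask (astar k)) K)
    by (intro k; apply dm_supp; [apply HsK|apply (Rs k)|apply (Rs k)]).
  set (Dd := fun k => mask_norm (fun i => a k i - astar k i)).
  set (DQ := fun k => mask_norm (fun i => diff_mask (a k) i - diff_mask (astar k) i)).
  assert (Hd : forall k i, Rabs (a k i - astar k i) <= Dd k).
  { intro k. destruct (supp_bnd K (fun i => a k i - astar k i)) as [B [_ HB]].
    - intros i Hi. rewrite (HaK k i Hi), (HsK k i Hi). ring.
    - apply (mn_bound _ B HB). }
  assert (Hdq : forall k i, Rabs (diff_mask (a k) i - diff_mask (astar k) i) <= DQ k).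
  { intro k. destruct (supp_bnd K (fun i => diff_mask (a k) i - diff_mask (astar k) i)) as [B [_ HB]].
    - intros i Hi. rewrite (HqK k i Hi), (HqsK k i Hi). ring.
    - apply (mn_bound _ B HB). }
  assert (Hd0 : forall k, 0 <= Dd k).
  { intro k. eapply Rle_trans; [apply Rabs_pos| apply (Hd k 0%Z)]. }
  assert (Hdq0 : forall k, 0 <= DQ k).
  { intro k. eapply Rle_trans; [apply Rabs_pos| apply (Hdq k 0%Z)]. }
  assert (H12 : forall k, DQ k <= INR (2 * K + 1) * Dd k).
  { intro k. apply (mn_bound _ _ (dm_diff_bound (a k) (astar k) K (Dd k) (HaK k) (HsK k) (Hd k))). }
  assert (H21 : forall k, Dd k <= 2 * DQ k).
  { intro k. apply (mn_bound _ (2 * DQ k)). intro i.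
    rewrite (dm_recover (a k) K i (HaK k)), (dm_recover (astar k) K i (HsK k)).
    replace (diff_mask (a k) i + diff_mask (a k) (i - 1)%Z - (diff_mask (astar k) i + diff_mask (astar k) (i - 1)%Z))
      with ((diff_mask (a k) i - diff_mask (astar k) i) + (diff_mask (a k) (i - 1)%Z - diff_mask (astar k) (i - 1)%Z)) by ring.
    eapply Rle_trans; [apply Rabs_triang|]. pose proof (Hdq k i). pose proof (Hdq k (i-1)%Z). lra. }
  assert (E12 : is_lim_seq Dd 0 -> is_lim_seq DQ 0).
  { intro H. apply (squeeze0 _ (fun k => INR (2 * K + 1) * Dd k)); [intro k; split; auto|].
    pose proof (lim_lin Dd Dd (INR (2 * K + 1)) 0 H H) as H'. eapply is_lim_seq_ext; [|exact H'].
    intro; simpl; ring. }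
  assert (E21 : is_lim_seq DQ 0 -> is_lim_seq Dd 0).
  { intro H. apply (squeeze0 _ (fun k => 2 * DQ k)); [intro k; split; auto|].
    pose proof (lim_lin DQ DQ 2 0 H H) as H'. eapply is_lim_seq_ext; [|exact H'].
    intro; simpl; ring. }
  split; [split; auto|].
  intro Hb. split.
  - intro H1. pose proof (E12 H1) as H2.
    destruct (lim_bounded DQ H2) as [M HM].
    assert (HM0 : 0 <= M) by (eapply Rle_trans; [apply Rabs_pos|apply (HM 0%nat)]).
    assert (HC : exists C, (forall m l, Rabs (diff_mask (a m) l) <= C) /\
                           (forall m l, Rabs (diff_mask (astar m) l) <= C)).
    { destruct Hb as [[C0 HC0]|[C0 HC0]].
      - exists (INR (2 * K + 1) * C0 + M).
        assert (Hq : forall m l, Rabs (diff_mask (a m) l) <= INR (2 * K + 1) * C0).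
        { intros m l. apply (dm_bound _ K); [apply HaK|]. intro j.
          eapply Rle_trans; [apply (abs_le_subd_norm _ K j (HaK m))|apply HC0]. }
        split.
        + intros m l. pose proof (Hq m l). lra.
        + intros m l. replace (diff_mask (astar m) l) with
            (diff_mask (a m) l - (diff_mask (a m) l - diff_mask (astar m) l)) by ring.
          eapply Rle_trans; [apply Rabs_triang|]. rewrite Rabs_Ropp.
          pose proof (Hq m l). pose proof (Hdq m l). pose proof (HM m). pose proof (Rle_abs (DQ m)). lra.
      - exists (INR (2 * K + 1) * C0 + M).
        assert (Hq : forall m l, Rabs (diff_mask (astar m) l) <= INR (2 * K + 1) * C0).
        { intros m l. apply (dm_bound _ K); [apply HsK|]. intro j.
          eapply Rle_trans; [apply (abs_le_subd_norm _ K j (HsK m))|apply HC0]. }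
        split.
        + intros m l. replace (diff_mask (a m) l) with
            (diff_mask (astar m) l + (diff_mask (a m) l - diff_mask (astar m) l)) by ring.
          eapply Rle_trans; [apply Rabs_triang|].
          pose proof (Hq m l). pose proof (Hdq m l). pose proof (HM m). pose proof (Rle_abs (DQ m)). lra.
        + intros m l. pose proof (Hq m l). lra. }
    destruct HC as [C [HCa HCs]].
    intro p. apply (squeeze0 _ (fun k => ee K C DQ p k)); [|apply ee_lim; auto].
    intro k.
    destruct (opnorm_bound (fun f i =>
          prod_ops (fun m => diff_mask (a m)) k p f i
          - prod_ops (fun m => diff_mask (astar m)) k p f i) (ee K C DQ p k * 1)) as [_ [Hn0 Hn1]].
    + intros f i Hf. apply (prod_bound_diff _ _ K C DQ); auto.
    + rewrite Rmult_1_r in Hn1. split; auto.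
  - intro H3. apply E21. specialize (H3 0%nat).
    apply (squeeze0 _ (fun k => opnorm (fun f i =>
          prod_ops (fun m => diff_mask (a m)) k 0 f i
          - prod_ops (fun m => diff_mask (astar m)) k 0 f i))); [|exact H3].
    intro k. split; auto.
    destruct (supp_bnd K _ (HqK k)) as [Q [_ HQ]].
    destruct (supp_bnd K _ (HqsK k)) as [Qs [_ HQs]].
    destruct (opnorm_bound (fun f i =>
          prod_ops (fun m => diff_mask (a m)) k 0 f i
          - prod_ops (fun m => diff_mask (astar m)) k 0 f i)
          (INR (S K) * (Q * 1) + INR (S K) * (Qs * 1))) as [Hn _].
    + intros f i Hf. simpl.
      eapply Rle_trans; [apply Rabs_triang|]. rewrite Rabs_Ropp.
      apply Rplus_le_compat; apply (subd_bound _ K); auto.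
    + apply (mn_bound _ _ ). intro i.
      pose proof (Hn (fun j => if Z.eqb j 0 then 1 else 0) i) as Hi. simpl in Hi.
      rewrite !subd_delta in Hi. apply Hi.
      intro j. destruct (Z.eqb j 0); rewrite ?Rabs_R1, ?Rabs_R0; lra.
Qed.
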